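(* Let $\Lambda\in\{\mathsf{CS4},\mathsf{IS4},\mathsf{S4I},\mathsf{GS4}\}$ and let $\varphi$ be a formula. (1) If $\Lambda\neq\mathsf{S4I}$ and $\varphi$ is satisfiable (resp. falsifiable) in a shallow $\Lambda$-model, then $\varphi$ is satisfiable (resp. falsifiable) in a $\Lambda$-model with finitely many worlds. (2) If $\Lambda=\mathsf{S4I}$ and $\varphi$ is satisfiable (resp. falsifiable) in a shallow, forest-like $\mathsf{S4I}$-model, then $\varphi$ is satisfiable (resp. falsifiable) in an $\mathsf{S4I}$-model with finitely many worlds.
   Context: Formulas over a countably infinite set $\mathbb P$ of variables: $p\mid\bot\mid\varphi\wedge\psi\mid\varphi\vee\psi\mid\varphi\to\psi\mid\Diamond\varphi\mid\Box\varphi$. A bi-intuitionistic frame is $(W,W_\bot,\preccurlyeq,\sqsubseteq)$ with $\preccurlyeq,\sqsubseteq$ preorders on $W$ and $W_\bot\subseteq W$ upward closed under both; infallible if $W_\bot=\varnothing$. A valuation $V:\mathbb P\to 2^W$ has each $V(p)$ upward closed under $\preccurlyeq$ and containing $W_\bot$; a model is $\mathcal M=(W,W_\bot,\preccurlyeq,\sqsubseteq,V)$. Satisfaction: $p$ iff $w\in V(p)$; $\bot$ iff $w\in W_\bot$; $\wedge,\vee$ pointwise; $w\models\varphi\to\psi$ iff for all $v\succcurlyeq w$, $v\models\varphi$ implies $v\models\psi$; $w\models\Diamond\varphi$ iff for all $u\succcurlyeq w$ there is $v\sqsupseteq u$ with $v\models\varphi$; $w\models\Box\varphi$ iff $v\models\varphi$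 whenever $w\preccurlyeq u\sqsubseteq v$. $\varphi$ is satisfiable (falsifiable) in $\mathcal M$ if $(\mathcal M,w)\models\varphi$ (resp. $\not\models$) for some $w\in W\setminus W_\bot$. $\sqsubseteq$ is forward confluent if $w\preccurlyeq w'$, $w\sqsubseteq v$ imply some $v'$ with $v\preccurlyeq v'$, $w'\sqsubseteq v'$; backward confluent if $w\sqsubseteq v\preccurlyeq v'$ implies some $w'$ with $w\preccurlyeq w'\sqsubseteq v'$; downward confluent if $w\preccurlyeq v\sqsubseteq v'$ implies some $w'$ with $w\sqsubseteq w'\preccurlyeq v'$. Locally linear: $w\preccurlyeq u$, $w\preccurlyeq v$ imply $u\preccurlyeq v$ or $v\preccurlyeq u$. $\mathsf{CS4}$-frames: backward confluent. $\mathsf{IS4}$-frames: infallible, forward and backward confluent. $\mathsf{GS4}$-frames: locally linear $\mathsf{IS4}$-frames. $\mathsf{S4I}$-frames: infallible, forward and downward confluent. A $\Lambda$-model is a model on a $\Lambda$-frame. Write $w\prec v$ if $w\preccurlyeq v$ and $v\not\preccurlyeq w$. The height of $w$ is the supremum of all $n$ for which there is a chain $w=w_0\prec w_1\prec\cdots\prec w_n$; the height of the model is the supremum of the heights of its worlds; the model is shallow if its height is finite. The model is forest-like if for every $w\in W$ the set $\{v\in W: v\preccurlyeq w\}$ is totally ordered by $\preccurlyeq$. *)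

(* Defs.v *)
From Stdlib Require Import List Arith.

Inductive form : Type :=
| Var : nat -> form
| Bot : form
| And : form -> form -> form
| Or  : form -> form -> form
| Imp : form -> form -> form
| Dia : form -> form
| Box : form -> form.

Definition preorder {W : Type} (R : W -> W -> Prop) : Prop :=
  (forall w, R w w) /\ (forall u v w, R u v -> R v w -> R u w).

Record model : Type := Model {
  world : Type;
  wbot : world -> Prop;
  ile : world -> world -> Prop;
  mle : world -> world -> Prop;
  val : nat -> world -> Prop;
  ile_pre : preorder ile;
  mle_pre : preorder mle;
  wbot_up_ile : forall w v, wbot w -> ile w v -> wbot v;
  wbot_up_mle : forall w v, wbot w -> mle w v -> wbot v;
  val_up : forall p w v, val p w -> ile w v -> val p v;
  val_bot : forall p w, wbot w -> val p w
}.

Fixpoint sat (M : model) (w : world M) (phi : form) : Prop :=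
  match phi with
  | Var p => val M p w
  | Bot => wbot M w
  | And a b => sat M w a /\ sat M w b
  | Or a b => sat M w a \/ sat M w b
  | Imp a b => forall v, ile M w v -> sat M v a -> sat M v b
  | Dia a => forall u, ile M w u -> exists v, mle M u v /\ sat M v a
  | Box a => forall u v, ile M w u -> mle M u v -> sat M v a
  end.

Definition satisfiable (M : model) (phi : form) : Prop :=
  exists w : world M, ~ wbot M w /\ sat M w phi.
Definition falsifiable (M : model) (phi : form) : Prop :=
  exists w : world M, ~ wbot M w /\ ~ sat M w phi.

Definition infallible (M : model) : Prop := forall w, ~ wbot M w.
Definition forward_confluent (M : model) : Prop :=
  forall w w' v, ile M w w' -> mle M w v -> exists v', ile M v v' /\ mle M w' v'.
Definition backward_confluent (M : model) : Prop :=
  forall w v v', mle M w v -> ile M v v' -> exists w', ile M w w' /\ mle M w' v'.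
Definition downward_confluent (M : model) : Prop :=
  forall w v v', ile M w v -> mle M v v' -> exists w', mle M w w' /\ ile M w' v'.
Definition locally_linear (M : model) : Prop :=
  forall w u v, ile M w u -> ile M w v -> ile M u v \/ ile M v u.

Inductive logic : Type := CS4 | IS4 | S4I | GS4.

Definition is_model_of (L : logic) (M : model) : Prop :=
  match L with
  | CS4 => backward_confluent M
  | IS4 => infallible M /\ forward_confluent M /\ backward_confluent M
  | GS4 => (infallible M /\ forward_confluent M /\ backward_confluent M)
           /\ locally_linear M
  | S4I => infallible M /\ forward_confluent M /\ downward_confluent M
  end.

Definition ilt (M : model) (w v : world M) : Prop := ile M w v /\ ~ ile M v w.

Definition shallow (M : model) : Prop :=
  exists N : nat, forall (n : nat) (c : nat -> world M),
    (forall i, i < n -> ilt M (c i) (c (S i))) -> n <= N.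

Definition forest_like (M : model) : Prop :=
  forall w u v, ile M u w -> ile M v w -> ile M u v \/ ile M v u.

Definition finite_model (M : model) : Prop :=
  exists l : list (world M), forall w, In w l.

(* Main.v *)
Require Import Defs.
From Stdlib Require Import List Arith Lia Classical FunctionalExtensionality PropExtensionality ProofIrrelevance.
Import ListNotations.

Definition finrange {A B : Type} (f : A -> B) := exists l : list B, forall a, In (f a) l.

Fixpoint allP (n : nat) : list (list Prop) :=
  match n with
  | 0 => [[]]
  | S m => flat_map (fun l => [True :: l; False :: l]) (allP m)
  end.

Lemma prop_TF (P : Prop) : P = True \/ P = False.
Proof.
  destruct (classic P) as [H|H]; [left|right]; apply propositional_extensionality; tauto.
Qed.

Lemma allP_in (l : list Prop) : In l (allP (length l)).
Proof.
  induction l as [|P l IH]; simpl; [auto|].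
  apply in_flat_map. exists l. split; auto.
  destruct (prop_TF P) as [->| ->]; simpl; auto.
Qed.

Fixpoint sublists {A} (l : list A) : list (list A) :=
  match l with
  | [] => [[]]
  | h :: t => sublists t ++ map (cons h) (sublists t)
  end.

Lemma sublists_pred {A} (l : list A) : forall P : A -> Prop, (forall a, P a -> In a l) ->
  exists s, In s (sublists l) /\ forall a, P a <-> In a s.
Proof.
  induction l as [|h t IH]; intros P HP; simpl.
  - exists []. split; auto. intros a; split; [intros Ha; destruct (HP a Ha)|intros []].
  - destruct (IH (fun a => P a /\ a <> h)) as [s [Hs Hs']].
    { intros a [Ha Hne]. destruct (HP a Ha); [congruence|auto]. }
    destruct (classic (P h)) as [Ph|nPh].
    + exists (h :: s). split. apply in_or_app; right; apply in_map; auto.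
      intros a; simpl; rewrite <- Hs'. split.
      * intros Pa. destruct (classic (h = a)); [auto|right; split; auto].
      * intros [<-|[]]; auto.
    + exists s. split. apply in_or_app; left; auto.
      intros a; rewrite <- Hs'. split; [|tauto]. intros Pa; split; auto. intros ->; auto.
Qed.

Definition preds {A} (l : list A) : list (A -> Prop) := map (fun s a => In a s) (sublists l).

Lemma preds_in {A} (l : list A) (P : A -> Prop) : (forall a, P a -> In a l) -> In P (preds l).
Proof.
  intros HP. destruct (sublists_pred l P HP) as [s [Hs Hs']].
  replace P with (fun a => In a s). unfold preds. apply (in_map (fun s a => In a s)); auto.
  apply functional_extensionality; intros a; apply propositional_extensionality; symmetry; auto.
Qed.

Lemma map_eq_in {A B : Type} (l : list (A -> B)) x y :
  map (fun c => c x) l = map (fun c => c y) l -> forall c, In c l -> c x = c y.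
Proof.
  induction l; simpl; intros H c Hc; [destruct Hc|]. injection H; intros.
  destruct Hc as [<-|]; auto.
Qed.

Fixpoint subs (a : form) : list form :=
  a :: match a with
       | And b c | Or b c | Imp b c => subs b ++ subs c
       | Dia b | Box b => subs b
       | _ => []
       end.

Lemma subs_refl a : In a (subs a).
Proof. destruct a; simpl; auto. Qed.

Lemma subs_trans a b c : In b (subs a) -> In c (subs b) -> In c (subs a).
Proof.
  induction a; simpl; intros Hb Hc; destruct Hb as [<-|Hb]; simpl in *; auto;
  try (destruct Hb); try (apply in_app_or in Hb; destruct Hb); right; try apply in_or_app; eauto.
Qed.

Ltac subf H := let X := fresh in intros X; apply (subs_trans _ _ _ H); simpl; auto 10 using in_or_app, subs_refl.

Lemma ile_refl (M : model) w : ile M w w. Proof. apply (proj1 (ile_pre M)). Qed.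
Lemma ile_trans (M : model) u v w : ile M u v -> ile M v w -> ile M u w. Proof. apply (proj2 (ile_pre M)). Qed.
Lemma mle_refl (M : model) w : mle M w w. Proof. apply (proj1 (mle_pre M)). Qed.
Lemma mle_trans (M : model) u v w : mle M u v -> mle M v w -> mle M u w. Proof. apply (proj2 (mle_pre M)). Qed.

Lemma persist (M : model) a : forall x y, sat M x a -> ile M x y -> sat M y a.
Proof.
  induction a; simpl; intros x y Hx Hxy.
  - eapply val_up; eauto.
  - eapply wbot_up_ile; eauto.
  - destruct Hx; split; eauto.
  - destruct Hx; [left|right]; eauto.
  - intros v Hv; apply Hx; eapply ile_trans; eauto.
  - intros u Hu; apply Hx; eapply ile_trans; eauto.
  - intros u v Hu; apply Hx; eapply ile_trans; eauto.
Qed.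

Section Chains.
Variable M : model.
Variable N : nat.
Hypothesis shal : forall (n : nat) (c : nat -> world M),
    (forall i, i < n -> ilt M (c i) (c (S i))) -> n <= N.

Definition Pup (x : world M) i := exists c : nat -> world M, c 0 = x /\ forall j, j < i -> ilt M (c j) (c (S j)).
Definition Pdn (x : world M) i := exists c : nat -> world M, c i = x /\ forall j, j < i -> ilt M (c j) (c (S j)).

Lemma Pup_bound x i : Pup x i -> i <= N.
Proof. intros [c [_ H]]; eapply shal; eauto. Qed.
Lemma Pdn_bound x i : Pdn x i -> i <= N.
Proof. intros [c [_ H]]; eapply shal; eauto. Qed.

Lemma Pup0 x : Pup x 0.
Proof. exists (fun _ => x); split; auto; intros; lia. Qed.
Lemma Pdn0 x : Pdn x 0.
Proof. exists (fun _ => x); split; auto; intros; lia. Qed.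

Lemma Pup_cluster a w i : ile M a w -> ile M w a -> Pup a i -> Pup w i.
Proof.
  intros Haw Hwa [c [Hc0 Hc]].
  exists (fun j => match j with 0 => w | S k => c (S k) end). split; auto.
  intros j Hj. destruct j.
  - destruct (Hc 0 Hj) as [H1 H2]. rewrite Hc0 in H1, H2. split.
    + eapply ile_trans; eauto.
    + intros H; apply H2; eapply ile_trans; eauto.
  - apply Hc; auto.
Qed.

Lemma Pup_strict b w i : ile M b w -> ~ ile M w b -> Pup w i -> Pup b (S i).
Proof.
  intros Hbw Hwb [c [Hc0 Hc]].
  exists (fun j => match j with 0 => b | S k => c k end). split; auto.
  intros j Hj. destruct j.
  - rewrite Hc0; split; auto.
  - apply Hc; lia.
Qed.

Lemma Pdn_le w z i : ile M w z -> Pdn w i -> Pdn z i.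
Proof.
  intros Hwz [c [Hci Hc]].
  exists (fun j => if Nat.eqb j i then z else c j). split.
  - rewrite Nat.eqb_refl; auto.
  - intros j Hj. destruct (Nat.eqb_spec j i); [lia|].
    destruct (Nat.eqb_spec (S j) i).
    + subst i. destruct (Hc j Hj) as [H1 H2]. rewrite Hci in H1, H2. split.
      * eapply ile_trans; eauto.
      * intros H; apply H2; eapply ile_trans; eauto.
    + apply Hc; auto.
Qed.

Lemma Pdn_strict z w i : ile M z w -> ~ ile M w z -> Pdn z i -> Pdn w (S i).
Proof.
  intros Hzw Hwz [c [Hci Hc]].
  exists (fun j => if Nat.eqb j (S i) then w else c j). split.
  - rewrite Nat.eqb_refl; auto.
  - intros j Hj. destruct (Nat.eqb_spec j (S i)); [lia|].
    destruct (Nat.eqb_spec (S j) (S i)).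
    + assert (j = i) by lia. subst j. rewrite Hci. split; auto.
    + apply Hc; lia.
Qed.

Lemma Pdn_le_iff w z : (ile M w z \/ ile M z w) ->
  (ile M w z <-> forall i, Pdn w i -> Pdn z i).
Proof.
  intros Hc. split.
  - intros H i; apply Pdn_le; auto.
  - intros H. apply NNPP; intros Hn. destruct Hc as [Hc|Hc]; [contradiction|].
    assert (forall i, Pdn z i).
    { induction i. apply Pdn0. apply H. eapply Pdn_strict; eauto. }
    specialize (H0 (S N)). apply Pdn_bound in H0. lia.
Qed.

Lemma Pup_same_cluster b w : ile M b w -> (forall i, Pup w i <-> Pup b i) -> ile M w b.
Proof.
  intros Hbw H. apply NNPP; intros Hn.
  assert (forall i, Pup b i).
  { induction i. apply Pup0. eapply Pup_strict; eauto. apply H; auto. }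
  specialize (H0 (S N)). apply Pup_bound in H0. lia.
Qed.

End Chains.

Fixpoint T (n : nat) : Type :=
  match n with
  | 0 => list Prop
  | S m => (list Prop * ((T m * (T m -> Prop)) -> Prop))%type
  end.

Definition lamof (n : nat) : T n -> list Prop :=
  match n return T n -> list Prop with 0 => fun t => t | S m => fun t => fst t end.

Section Types.
Variable M : model.
Variable lam : world M -> list Prop.

Fixpoint U (n : nat) : world M -> T n :=
  match n return world M -> T n with
  | 0 => fun x => lam x
  | S m => fun x => (lam x, fun p => exists x', ile M x x' /\
        p = (U m x', fun q => exists w, ile M x w /\ ile M w x' /\ U m w = q))
  end.

Definition Int m x x' : T m -> Prop := fun q => exists w, ile M x w /\ ile M w x' /\ U m w = q.
Definition Pfun m x : (T m * (T m -> Prop)) -> Prop := fun p => exists x', ile M x x' /\ p = (U m x', Int m x x').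

Lemma U_S m x : U (S m) x = (lam x, Pfun m x).
Proof. reflexivity. Qed.

Lemma lamof_U n x : lamof n (U n x) = lam x.
Proof. destruct n; reflexivity. Qed.

Lemma U_lam n x y : U n x = U n y -> lam x = lam y.
Proof. intros H. rewrite <- (lamof_U n x), <- (lamof_U n y), H; auto. Qed.

Lemma Int_cluster m x y x' : ile M x y -> ile M y x -> Int m x x' = Int m y x'.
Proof.
  intros Hxy Hyx. apply functional_extensionality; intros q; apply propositional_extensionality.
  unfold Int; split; intros [w [H1 [H2 H3]]]; exists w; repeat split; auto; eapply ile_trans; eauto.
Qed.

Lemma Pfun_cluster m x y : ile M x y -> ile M y x -> Pfun m x = Pfun m y.
Proof.
  intros Hxy Hyx. apply functional_extensionality; intros p; apply propositional_extensionality.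
  unfold Pfun. split; intros [x' [H1 H2]]; exists x'; subst p.
  - split. eapply ile_trans; eauto. rewrite (Int_cluster m x y x'); auto.
  - split. eapply ile_trans; eauto. rewrite (Int_cluster m x y x'); auto.
Qed.

Variable N : nat.
Hypothesis shal : forall (n : nat) (c : nat -> world M),
    (forall i, i < n -> ilt M (c i) (c (S i))) -> n <= N.
Hypothesis lam_Pup : forall x y, lam x = lam y -> forall i, Pup M x i <-> Pup M y i.

Lemma stab : forall k a, ~ Pup M a k -> forall n, k <= n -> forall b, U n a = U n b -> U (S n) a = U (S n) b.
Proof.
  induction k as [|k IH]; intros a Ha n Hkn b Hab.
  { exfalso; apply Ha, Pup0. }
  destruct n as [|m]; [lia|].
  assert (Hl : lam a = lam b) by (apply (U_lam _ _ _ Hab)).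
  assert (Hp : Pfun m a = Pfun m b) by (rewrite !U_S in Hab; injection Hab; auto).
  assert (HH : forall w w', ile M a w -> ile M b w' -> U m w = U m w' -> U (S m) w = U (S m) w').
  { intros w w' Haw Hbw' Hw.
    destruct (classic (ile M w a)) as [Hwa|Hwa].
    - assert (Hlw : lam w = lam w') by (apply (U_lam _ _ _ Hw)).
      assert (Hw'b : ile M w' b).
      { apply (Pup_same_cluster M N shal); auto. intros i.
        rewrite <- (lam_Pup _ _ Hlw), <- (lam_Pup _ _ Hl). split.
        - apply Pup_cluster; auto.
        - apply Pup_cluster; auto. }
      rewrite !U_S. rewrite <- (Pfun_cluster m a w), <- (Pfun_cluster m b w'), Hlw, Hp; auto.
    - apply (IH w); [ | lia | exact Hw].
      intros Hk. apply Ha. eapply Pup_strict; eauto. }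
  rewrite !U_S. f_equal; auto.
  apply functional_extensionality; intros p; apply propositional_extensionality.
  unfold Pfun at 1 2. split.
  - intros [x' [Hax' ->]].
    assert (Hin : Pfun m b (U m x', Int m a x')) by (rewrite <- Hp; exists x'; auto).
    destruct Hin as [y' [Hby' Heq]]. injection Heq; intros Hi Hu.
    exists y'. split; auto. f_equal. apply HH; auto.
    apply functional_extensionality; intros q; apply propositional_extensionality.
    split.
    + intros [w [H1 [H2 <-]]].
      assert (Int m b y' (U m w)) as [w' [H3 [H4 H5]]] by (rewrite <- Hi; exists w; auto).
      exists w'; repeat split; auto. symmetry; apply HH; auto.
    + intros [w' [H1 [H2 <-]]].
      assert (Int m a x' (U m w')) as [w [H3 [H4 H5]]] by (rewrite Hi; exists w'; auto).
      exists w; repeat split; auto.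
  - intros [y' [Hby' ->]].
    assert (Hin : Pfun m a (U m y', Int m b y')) by (rewrite Hp; exists y'; auto).
    destruct Hin as [x' [Hax' Heq]]. injection Heq; intros Hi Hu.
    exists x'. split; auto. f_equal. symmetry. apply HH; auto.
    apply functional_extensionality; intros q; apply propositional_extensionality.
    split.
    + intros [w [H1 [H2 <-]]].
      assert (Int m a x' (U m w)) as [w' [H3 [H4 H5]]] by (rewrite <- Hi; exists w; auto).
      exists w'; repeat split; auto.
    + intros [w' [H1 [H2 <-]]].
      assert (Int m b y' (U m w')) as [w [H3 [H4 H5]]] by (rewrite Hi; exists w'; auto).
      exists w; repeat split; auto. symmetry; apply HH; auto.
Qed.

Definition K := S N.

Lemma stabK a b : U K a = U K b -> U (S K) a = U (S K) b.
Proof.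
  apply stab with K; auto. intros H; apply (Pup_bound M N shal) in H. unfold K in H; lia.
Qed.

Lemma zigK x y x' : U K x = U K y -> ile M x x' ->
  exists y', ile M y y' /\ U K y' = U K x' /\ Int K y y' = Int K x x'.
Proof.
  intros H Hxx'. apply stabK in H. rewrite !U_S in H. injection H; intros Hp _.
  assert (Pfun K y (U K x', Int K x x')) as [y' [H1 H2]] by (rewrite <- Hp; exists x'; auto).
  exists y'; split; [exact H1|split; [exact (eq_sym (f_equal fst H2))|exact (eq_sym (f_equal snd H2))]].
Qed.

End Types.

Lemma U_fin (M : model) lam L : (forall x, length (lam x) = L) -> forall n, finrange (U M lam n).
Proof.
  intros HL n. induction n as [|m [l Hl]].
  - exists (allP L). intros x; simpl. rewrite <- (HL x). apply allP_in.
  - exists (list_prod (allP L) (preds (list_prod l (preds l)))).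
    intros x. rewrite U_S. apply in_prod.
    + rewrite <- (HL x); apply allP_in.
    + apply preds_in. intros p [x' [_ ->]]. apply in_prod; auto.
      apply preds_in. intros q [w [_ [_ <-]]]. auto.
Qed.

Section Filt.
Variable M : model.
Variable Sg : list form.
Variable TT : Type.
Variable sg : world M -> TT.

Definition Ex x c := exists v, mle M x v /\ sat M v c.
Definition W' := {t : TT | exists x, sg x = t}.
Definition ile' (t u : W') := forall x, sg x = proj1_sig t -> exists y, ile M x y /\ sg y = proj1_sig u.
Definition cond x y := (wbot M x -> wbot M y) /\ forall c, In c Sg ->
   (forall a, c = Box a -> sat M x c -> sat M y c /\ sat M y a) /\ (sat M y c -> Ex x c) /\ (Ex y c -> Ex x c).
Definition Rmax (t s : W') := forall x y, sg x = proj1_sig t -> sg y = proj1_sig s -> cond x y.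
Definition BCr (Q : W' -> W' -> Prop) := forall t s s', Q t s -> ile' s s' -> exists t', ile' t t' /\ Q t' s'.
Definition FCr (Q : W' -> W' -> Prop) := forall t t' s, ile' t t' -> Q t s -> exists s', ile' s s' /\ Q t' s'.
Definition DCr (Q : W' -> W' -> Prop) := forall t u v, ile' t u -> Q u v -> exists w, Q t w /\ ile' w v.
Definition Zag := forall x y z, sg x = sg y -> ile M z x -> exists z', ile M z' y /\ sg z' = sg z.
Definition Conf Q := (backward_confluent M -> BCr Q) /\ (forward_confluent M -> FCr Q) /\
                     (downward_confluent M -> Zag -> DCr Q).
Definition mle' (t s : W') := exists Q, (forall a b, Q a b -> a = b \/ Rmax a b) /\ Conf Q /\ Q t s.
Definition wbot' (t : W') := exists x, sg x = proj1_sig t /\ wbot M x.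
Definition val' p (t : W') := exists x, sg x = proj1_sig t /\ val M p x.

Lemma ile'_pre : preorder ile'.
Proof.
  split.
  - intros t x Hx; exists x; split; auto using ile_refl.
  - intros t u v H1 H2 x Hx. destruct (H1 x Hx) as [y [Hy1 Hy2]]. destruct (H2 y Hy2) as [z [Hz1 Hz2]].
    exists z; split; auto. eapply ile_trans; eauto.
Qed.

Lemma cond_trans x y z : cond x y -> cond y z -> cond x z.
Proof.
  intros [H1 H2] [H3 H4]. split; auto. intros c Hc.
  destruct (H2 c Hc) as [A1 [A2 A3]]. destruct (H4 c Hc) as [B1 [B2 B3]].
  split; [|split; auto].
  intros b Hb Hx. subst c. destruct (A1 b eq_refl Hx). apply (B1 b eq_refl); auto.
Qed.

Lemma Rmax_trans t s r : Rmax t s -> Rmax s r -> Rmax t r.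
Proof.
  intros H1 H2 x z Hx Hz. destruct (proj2_sig s) as [y Hy].
  apply cond_trans with y; auto.
Qed.

Definition comp (Q1 Q2 : W' -> W' -> Prop) a c := exists b, Q1 a b /\ Q2 b c.

Lemma Conf_comp Q1 Q2 : Conf Q1 -> Conf Q2 -> Conf (comp Q1 Q2).
Proof.
  intros [A1 [A2 A3]] [B1 [B2 B3]]. repeat split.
  - intros HB t s s' [m [H1 H2]] H3.
    destruct (B1 HB m s s' H2 H3) as [m' [H4 H5]]. destruct (A1 HB t m m' H1 H4) as [t' [H6 H7]].
    exists t'; split; auto; exists m'; auto.
  - intros HF t t' s H1 [m [H2 H3]].
    destruct (A2 HF t t' m H1 H2) as [m' [H4 H5]]. destruct (B2 HF m m' s H4 H3) as [s' [H6 H7]].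
    exists s'; split; auto; exists m'; auto.
  - intros HD HZ t u v H1 [m [H2 H3]].
    destruct (A3 HD HZ t u m H1 H2) as [w1 [H4 H5]]. destruct (B3 HD HZ w1 m v H5 H3) as [w2 [H6 H7]].
    exists w2; split; auto; exists w1; auto.
Qed.

Lemma Conf_eq : Conf eq.
Proof.
  repeat split.
  - intros _ t s s' <- H; exists s'; auto.
  - intros _ t t' s H <-; exists t'; auto.
  - intros _ _ t u v H <-; exists t; split; auto.
Qed.

Lemma mle'_pre : preorder mle'.
Proof.
  split.
  - intros t; exists eq; split; [intros a b H; left; auto | split; [apply Conf_eq | reflexivity]].
  - intros t s r [Q1 [H1 [H2 H3]]] [Q2 [H4 [H5 H6]]].
    exists (comp Q1 Q2); split; [|split; [apply Conf_comp; auto| exists s; auto]].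
    intros a c [b [Hab Hbc]]. destruct (H1 _ _ Hab) as [<-|Hab']; destruct (H4 _ _ Hbc) as [<-|Hbc']; auto.
      right; eapply Rmax_trans; eauto.
Qed.

Lemma wbot'_up_ile w v : wbot' w -> ile' w v -> wbot' v.
Proof.
  intros [x [Hx Hb]] H. destruct (H x Hx) as [y [Hy1 Hy2]]. exists y; split; auto. eapply wbot_up_ile; eauto.
Qed.

Lemma wbot'_up_mle w v : wbot' w -> mle' w v -> wbot' v.
Proof.
  intros [x [Hx Hb]] [Q [HQ [_ Hwv]]]. destruct (HQ _ _ Hwv) as [<-|HR].
  - exists x; auto.
  - destruct (proj2_sig v) as [y Hy]. exists y; split; auto. apply (proj1 (HR x y Hx Hy)); auto.
Qed.

Lemma val'_up p w v : val' p w -> ile' w v -> val' p v.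
Proof.
  intros [x [Hx Hb]] H. destruct (H x Hx) as [y [Hy1 Hy2]]. exists y; split; auto. eapply val_up; eauto.
Qed.

Lemma val'_bot p w : wbot' w -> val' p w.
Proof. intros [x [Hx Hb]]; exists x; split; auto. apply val_bot; auto. Qed.

Definition Filt : model := Model W' wbot' ile' mle' val' ile'_pre mle'_pre
  wbot'_up_ile wbot'_up_mle val'_up val'_bot.

Definition emb (x : world M) : W' := exist _ (sg x) (ex_intro _ x eq_refl).

Definition Im (t s : W') := exists x y, sg x = proj1_sig t /\ sg y = proj1_sig s /\ mle M x y.

Hypothesis Hzig : forall x y x', sg x = sg y -> ile M x x' -> exists y', ile M y y' /\ sg y' = sg x'.

Lemma ile'_emb x y : ile M x y -> ile' (emb x) (emb y).
Proof. intros H x0 Hx0. simpl in Hx0. apply (Hzig x x0 y); auto. Qed.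

Lemma Im_conf : Conf Im.
Proof.
  repeat split.
  - intros HB t s s' [x [y [Hx [Hy Hxy]]]] Hs.
    destruct (Hs y Hy) as [y' [Hyy' Hy']].
    destruct (HB x y y' Hxy Hyy') as [x' [Hxx' Hx'y']].
    exists (emb x'). split.
    + intros x0 Hx0. rewrite <- Hx in Hx0. destruct (Hzig x x0 x') as [z [Hz1 Hz2]]; [congruence|auto|exists z; split; auto].
    + exists x', y'; repeat split; auto.
  - intros HF t t' s Ht [x [y [Hx [Hy Hxy]]]].
    destruct (Ht x Hx) as [x' [Hxx' Hx']].
    destruct (HF x x' y Hxx' Hxy) as [y' [Hyy' Hx'y']].
    exists (emb y'). split.
    + intros y0 Hy0. rewrite <- Hy in Hy0. destruct (Hzig y y0 y') as [z [Hz1 Hz2]]; [congruence|auto|exists z; split; auto].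
    + exists x', y'; repeat split; auto.
  - intros HD HZ t u v Htu [x [y [Hx [Hy Hxy]]]].
    destruct (proj2_sig t) as [z Hz].
    destruct (Htu z Hz) as [x1 [Hzx1 Hx1]].
    destruct (HZ x1 x z) as [z' [Hz'x Hz']]; [congruence|auto|].
    destruct (HD z' x y Hz'x Hxy) as [w [Hz'w Hwy]].
    exists (emb w). split.
    + exists z', w; repeat split; auto. congruence.
    + intros w0 Hw0. destruct (Hzig w w0 y) as [y0 [H1 H2]]; [auto|auto|exists y0; split; auto; congruence].
Qed.

Hypothesis Hcl : forall c d, In c Sg -> In d (subs c) -> In d Sg.
Hypothesis HG : forall x y, sg x = sg y -> (wbot M x <-> wbot M y) /\
   forall c, In c Sg -> (sat M x c <-> sat M y c) /\ (Ex x c <-> Ex y c).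
Hypothesis HBoxP : forall x y a, mle M x y -> sat M x (Box a) -> sat M y (Box a).

Lemma cond_Im x y : mle M x y -> cond x y.
Proof.
  intros H. split. intros; eapply wbot_up_mle; eauto.
  intros c Hc. split; [|split].
  - intros a -> Hx. split. eapply HBoxP; eauto. apply (HBoxP x y a H Hx y y); auto using ile_refl, mle_refl.
  - intros Hy; exists y; auto.
  - intros [v [H1 H2]]; exists v; split; auto; eapply mle_trans; eauto.
Qed.

Lemma cond_transfer x y x' y' : sg x = sg x' -> sg y = sg y' -> cond x y -> cond x' y'.
Proof.
  intros Hx Hy [H1 H2]. destruct (HG _ _ Hx) as [Gx1 Gx2]. destruct (HG _ _ Hy) as [Gy1 Gy2].
  split. intros; apply Gy1, H1, Gx1; auto.
  intros c Hc. destruct (H2 c Hc) as [A1 [A2 A3]].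
  destruct (Gx2 c Hc) as [Sx Ex_]. destruct (Gy2 c Hc) as [Sy Ey].
  split; [|split].
  - intros a -> Hx'. destruct (A1 a eq_refl) as [B1 B2]. apply Sx; auto.
    assert (Ha : In a Sg) by (apply (Hcl _ a Hc); simpl; right; apply subs_refl).
    split. apply Sy; auto. apply (proj1 (Gy2 a Ha)); auto.
  - intros H; apply Ex_, A2, Sy; auto.
  - intros H; apply Ex_, A3, Ey; auto.
Qed.

Lemma Im_Rmax t s : Im t s -> Rmax t s.
Proof.
  intros [x [y [Hx [Hy Hxy]]]] x' y' Hx' Hy'. apply cond_transfer with x y; try congruence.
  apply cond_Im; auto.
Qed.

Lemma Im_mle' x y : mle M x y -> mle' (emb x) (emb y).
Proof.
  intros H. exists Im. split; [intros a b Hab; right; apply Im_Rmax; auto|split; [apply Im_conf|]].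
  exists x, y; auto.
Qed.

Lemma mle'_cond (u v : W') x y : mle' u v -> proj1_sig u = sg x -> proj1_sig v = sg y ->
  cond x y \/ sg x = sg y.
Proof.
  intros [Q [HQ [_ H]]] Hx Hy. destruct (HQ _ _ H) as [<-|HR]; [right; congruence|left].
  apply HR; auto.
Qed.

Lemma truth : forall c, In c Sg -> forall (w : W') x, proj1_sig w = sg x -> (sat Filt w c <-> sat M x c).
Proof.
  induction c; intros Hc w x Hw; simpl.
  - split.
    + intros [x' [Hx' Hv]]. destruct (HG x' x) as [_ G]; [congruence|]. apply (proj1 (G _ Hc)); auto.
    + intros H; exists x; auto.
  - split.
    + intros [x' [Hx' Hv]]. destruct (HG x' x) as [G _]; [congruence|]. apply G; auto.
    + intros H; exists x; auto.
  - assert (H1 : In c1 Sg) by (apply (Hcl _ c1 Hc); simpl; right; apply in_or_app; left; apply subs_refl).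
    assert (H2 : In c2 Sg) by (apply (Hcl _ c2 Hc); simpl; right; apply in_or_app; right; apply subs_refl).
    rewrite (IHc1 H1 w x Hw), (IHc2 H2 w x Hw). tauto.
  - assert (H1 : In c1 Sg) by (apply (Hcl _ c1 Hc); simpl; right; apply in_or_app; left; apply subs_refl).
    assert (H2 : In c2 Sg) by (apply (Hcl _ c2 Hc); simpl; right; apply in_or_app; right; apply subs_refl).
    rewrite (IHc1 H1 w x Hw), (IHc2 H2 w x Hw). tauto.
  - assert (H1 : In c1 Sg) by (apply (Hcl _ c1 Hc); simpl; right; apply in_or_app; left; apply subs_refl).
    assert (H2 : In c2 Sg) by (apply (Hcl _ c2 Hc); simpl; right; apply in_or_app; right; apply subs_refl).
    split.
    + intros H v Hxv Hv. apply (IHc2 H2 (emb v) v eq_refl). apply H.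
      * intros x0 Hx0. apply (Hzig x x0 v); auto. congruence.
      * apply (IHc1 H1 (emb v) v eq_refl); auto.
    + intros H v Hwv Hv. destruct (Hwv x (eq_sym Hw)) as [y [Hxy Hy]].
      apply (IHc2 H2 v y (eq_sym Hy)). apply H; auto. apply (IHc1 H1 v y (eq_sym Hy)); auto.
  - assert (H1 : In c Sg) by (apply (Hcl _ c Hc); simpl; right; apply subs_refl).
    split.
    + intros H u Hxu. apply NNPP; intros Hn.
      destruct (H (emb u)) as [v [Hv1 Hv2]].
      { intros x0 Hx0. apply (Hzig x x0 u); auto. congruence. }
      destruct (proj2_sig v) as [y Hy].
      apply (IHc H1 v y (eq_sym Hy)) in Hv2.
      destruct (mle'_cond _ _ u y Hv1 eq_refl (eq_sym Hy)) as [[_ C]|E].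
      * apply Hn. apply (proj1 (proj2 (C c H1))); auto.
      * apply Hn. exists u; split; auto using mle_refl. destruct (HG u y E) as [_ G]. apply (proj1 (G c H1)); auto.
    + intros H u Hwu. destruct (Hwu x (eq_sym Hw)) as [y [Hxy Hy]].
      destruct (H y Hxy) as [v [Hyv Hv]].
      exists (emb v). split.
      * replace u with (emb y). apply Im_mle'; auto.
        destruct u as [t pt]. unfold emb. simpl in Hy. subst t. f_equal. apply proof_irrelevance.
      * apply (IHc H1 (emb v) v eq_refl); auto.
  - assert (H1 : In c Sg) by (apply (Hcl _ c Hc); simpl; right; apply subs_refl).
    split.
    + intros H u v Hxu Huv. apply (IHc H1 (emb v) v eq_refl).
      apply (H (emb u) (emb v)).
      * intros x0 Hx0. apply (Hzig x x0 u); auto. congruence.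
      * apply Im_mle'; auto.
    + intros H u v Hwu Huv. destruct (Hwu x (eq_sym Hw)) as [y [Hxy Hy]].
      destruct (proj2_sig v) as [z Hz].
      apply (IHc H1 v z (eq_sym Hz)).
      assert (Hb : sat M y (Box c)) by (eapply persist; eauto).
      destruct (mle'_cond _ _ y z Huv (eq_sym Hy) (eq_sym Hz)) as [[_ C]|E].
      * apply (proj1 (C (Box c) Hc) c eq_refl Hb).
      * destruct (HG y z E) as [_ G]. apply (G c H1). apply (Hb y y); auto using ile_refl, mle_refl.
Qed.

End Filt.

Section Frame.
Variable M : model.
Variable Sg : list form.
Variable TT : Type.
Variable sg : world M -> TT.
Hypothesis Hzig : forall x y x', sg x = sg y -> ile M x x' -> exists y', ile M y y' /\ sg y' = sg x'.

Lemma Filt_finite : finrange sg -> finite_model (Filt M Sg TT sg).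
Proof.
  intros [l Hl].
  assert (forall l, exists l' : list (W' M TT sg), forall w, In (proj1_sig w) l -> In w l') as HH.
  { induction l0 as [|h t [l' IH]].
    - exists []; intros w [].
    - destruct (classic (exists x, sg x = h)) as [Hh|Hh].
      + exists (exist _ h Hh :: l'). intros [t0 p] Hin. simpl in Hin. destruct Hin as [<-|Hin].
        * left. f_equal. apply proof_irrelevance.
        * right. apply (IH (exist _ t0 p)); auto.
      + exists l'. intros [t0 p] Hin. simpl in Hin. destruct Hin as [<-|Hin]; [contradiction|].
        apply (IH (exist _ t0 p)); auto. }
  destruct (HH l) as [l' Hl']. exists l'. intros [t [x <-]]. apply Hl'; simpl; auto.
Qed.

Lemma Filt_infallible : infallible M -> infallible (Filt M Sg TT sg).
Proof. intros H w [x [_ Hx]]; apply (H x); auto. Qed.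

Lemma Filt_bc : backward_confluent M -> backward_confluent (Filt M Sg TT sg).
Proof.
  intros HB t s s' [Q [HQ [HC Hts]]] Hss'. simpl in *.
  destruct (proj1 HC HB t s s' Hts Hss') as [t' [H1 H2]]. exists t'; split; auto. exists Q; auto.
Qed.

Lemma Filt_fc : forward_confluent M -> forward_confluent (Filt M Sg TT sg).
Proof.
  intros HF t t' s Htt' [Q [HQ [HC Hts]]]. simpl in *.
  destruct (proj1 (proj2 HC) HF t t' s Htt' Hts) as [s' [H1 H2]]. exists s'; split; auto. exists Q; auto.
Qed.

Lemma Filt_dc : downward_confluent M -> Zag M TT sg -> downward_confluent (Filt M Sg TT sg).
Proof.
  intros HD HZ t u v Htu [Q [HQ [HC Huv]]]. simpl in *.
  destruct (proj2 (proj2 HC) HD HZ t u v Htu Huv) as [w [H1 H2]]. exists w; split; auto. exists Q; auto.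
Qed.

Lemma Filt_ll : locally_linear M -> locally_linear (Filt M Sg TT sg).
Proof.
  intros HL t u v Htu Htv. simpl in *. destruct (proj2_sig t) as [x Hx].
  destruct (Htu x Hx) as [y [Hxy Hy]]. destruct (Htv x Hx) as [z [Hxz Hz]].
  destruct (HL x y z Hxy Hxz) as [H|H]; [left|right].
  - intros y0 Hy0. destruct (Hzig y y0 z) as [z0 [H1 H2]]; [congruence|auto|exists z0; split; auto; congruence].
  - intros z0 Hz0. destruct (Hzig z z0 y) as [y0 [H1 H2]]; [congruence|auto|exists y0; split; auto; congruence].
Qed.

End Frame.

Lemma finish (M : model) phi (TT : Type) (sg : world M -> TT)
  (Hzig : forall x y x', sg x = sg y -> ile M x x' -> exists y', ile M y y' /\ sg y' = sg x')
  (HG : forall x y, sg x = sg y -> (wbot M x <-> wbot M y) /\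
      forall c, In c (subs phi) -> (sat M x c <-> sat M y c) /\ (Ex M x c <-> Ex M y c))
  (HBoxP : forall x y a, mle M x y -> sat M x (Box a) -> sat M y (Box a))
  (Hfin : finrange sg) :
  finite_model (Filt M (subs phi) TT sg) /\
  (satisfiable M phi -> satisfiable (Filt M (subs phi) TT sg) phi) /\
  (falsifiable M phi -> falsifiable (Filt M (subs phi) TT sg) phi).
Proof.
  assert (Hcl : forall c d, In c (subs phi) -> In d (subs c) -> In d (subs phi)) by apply subs_trans.
  assert (Hnb : forall w, ~ wbot M w -> ~ wbot (Filt M (subs phi) TT sg) (emb M TT sg w)).
  { intros w Hw [x [Hx Hb]]. apply Hw. apply (proj1 (HG x w Hx)); auto. }
  split; [apply Filt_finite; auto|split].
  - intros [w [Hw Hs]]. exists (emb M TT sg w). split; auto.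
    apply (truth M (subs phi) TT sg Hzig Hcl HG HBoxP phi (subs_refl phi) (emb M TT sg w) w eq_refl); auto.
  - intros [w [Hw Hs]]. exists (emb M TT sg w). split; auto.
    rewrite (truth M (subs phi) TT sg Hzig Hcl HG HBoxP phi (subs_refl phi) (emb M TT sg w) w eq_refl); auto.
Qed.

Lemma BoxP_bc (M : model) : backward_confluent M -> forall x y a, mle M x y -> sat M x (Box a) -> sat M y (Box a).
Proof.
  intros HB x y a Hxy Hx u v Hyu Huv. destruct (HB x y u Hxy Hyu) as [w [Hxw Hwu]].
  apply (Hx w v Hxw). eapply mle_trans; eauto.
Qed.

Lemma BoxP_dc (M : model) : downward_confluent M -> forall x y a, mle M x y -> sat M x (Box a) -> sat M y (Box a).
Proof.
  intros HD x y a Hxy Hx u v Hyu Huv. destruct (HD y u v Hyu Huv) as [w [Hyw Hwv]].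
  eapply persist; [|exact Hwv]. apply (Hx x w); auto using ile_refl. eapply mle_trans; eauto.
Qed.

Section Labels.
Variable M : model.
Variable N : nat.
Hypothesis shal : forall (n : nat) (c : nat -> world M),
    (forall i, i < n -> ilt M (c i) (c (S i))) -> n <= N.
Variable phi : form.

Definition Lp : list (world M -> Prop) :=
  (fun x => wbot M x) :: map (fun c x => sat M x c) (subs phi) ++ map (fun c x => Ex M x c) (subs phi) ++
  map (fun i x => Pup M x i) (seq 0 (S N)) ++ map (fun i x => Pdn M x i) (seq 0 (S N)).

Definition lam (x : world M) : list Prop := map (fun c => c x) Lp.

Lemma lam_len x : length (lam x) = length Lp.
Proof. unfold lam; apply length_map. Qed.

Lemma lam_in x y : lam x = lam y -> forall c, In c Lp -> (c x <-> c y).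
Proof. intros H c Hc. rewrite (map_eq_in Lp x y H c Hc); tauto. Qed.

Lemma lam_G x y : lam x = lam y -> (wbot M x <-> wbot M y) /\
      forall c, In c (subs phi) -> (sat M x c <-> sat M y c) /\ (Ex M x c <-> Ex M y c).
Proof.
  intros H. split. apply (lam_in x y H (fun x => wbot M x)); simpl; auto.
  intros c Hc. split.
  - apply (lam_in x y H (fun x => sat M x c)). unfold Lp. apply in_cons. rewrite !in_app_iff. left.
    apply (in_map (fun c x => sat M x c)); auto.
  - apply (lam_in x y H (fun x => Ex M x c)). unfold Lp. apply in_cons. rewrite !in_app_iff. right; left.
    apply (in_map (fun c x => Ex M x c)); auto.
Qed.

Lemma lam_Pup x y : lam x = lam y -> forall i, Pup M x i <-> Pup M y i.
Proof.
  intros H i. destruct (le_lt_dec i N) as [Hi|Hi].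
  - apply (lam_in x y H (fun x => Pup M x i)). unfold Lp. apply in_cons. rewrite !in_app_iff. right; right; left.
    apply (in_map (fun i x => Pup M x i)). apply in_seq. lia.
  - split; intros Hp; apply (Pup_bound M N shal) in Hp; lia.
Qed.

Lemma lam_Pdn x y : lam x = lam y -> forall i, Pdn M x i <-> Pdn M y i.
Proof.
  intros H i. destruct (le_lt_dec i N) as [Hi|Hi].
  - apply (lam_in x y H (fun x => Pdn M x i)). unfold Lp. apply in_cons. rewrite !in_app_iff. right; right; right.
    apply (in_map (fun i x => Pdn M x i)). apply in_seq. lia.
  - split; intros Hp; apply (Pdn_bound M N shal) in Hp; lia.
Qed.

Definition sg1 := U M lam (K N).

Lemma sg1_zig x y x' : sg1 x = sg1 y -> ile M x x' -> exists y', ile M y y' /\ sg1 y' = sg1 x'.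
Proof.
  intros H Hx. destruct (zigK M lam N shal lam_Pup x y x' H Hx) as [y' [H1 [H2 _]]]. exists y'; auto.
Qed.

Lemma sg1_G x y : sg1 x = sg1 y -> (wbot M x <-> wbot M y) /\
      forall c, In c (subs phi) -> (sat M x c <-> sat M y c) /\ (Ex M x c <-> Ex M y c).
Proof. intros H; apply lam_G. apply (U_lam M lam _ _ _ H). Qed.

Lemma sg1_fin : finrange sg1.
Proof. apply (U_fin M lam (length Lp) lam_len). Qed.

Hypothesis forest : forest_like M.

Definition Sset x : T (K N) -> Prop := fun q => exists z, ile M z x /\ sg1 z = q.
Definition sg2 x := (sg1 x, Sset x).

Lemma sg2_zig x y x' : sg2 x = sg2 y -> ile M x x' -> exists y', ile M y y' /\ sg2 y' = sg2 x'.
Proof.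
  intros H Hx. assert (H1 : sg1 x = sg1 y) by exact (f_equal fst H).
  assert (H2 : Sset x = Sset y) by exact (f_equal snd H).
  destruct (zigK M lam N shal lam_Pup x y x' H1 Hx) as [y' [Hy [E1 E2]]].
  exists y'. split; auto. unfold sg2. fold sg1 in E1. rewrite E1. f_equal.
  apply functional_extensionality; intros q; apply propositional_extensionality. split.
  - intros [z [Hz <-]]. destruct (forest y' z y Hz Hy) as [Hzy|Hyz].
    + assert (Sset x (sg1 z)) as [z' [Hz' E]] by (rewrite H2; exists z; auto).
      exists z'; split; auto. eapply ile_trans; eauto.
    + assert (Int M lam (K N) x x' (sg1 z)) as [w [W1 [W2 W3]]] by (rewrite <- E2; exists z; auto).
      exists w; split; auto.
  - intros [z [Hz <-]]. destruct (forest x' z x Hz Hx) as [Hzx|Hxz].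
    + assert (Sset y (sg1 z)) as [z' [Hz' E]] by (rewrite <- H2; exists z; auto).
      exists z'; split; auto. eapply ile_trans; eauto.
    + assert (Int M lam (K N) y y' (sg1 z)) as [w [W1 [W2 W3]]] by (rewrite E2; exists z; auto).
      exists w; split; auto.
Qed.

Lemma sg2_zag : Zag M _ sg2.
Proof.
  intros x y z H Hzx. assert (H2 : Sset x = Sset y) by exact (f_equal snd H).
  assert (Sset y (sg1 z)) as [z' [Hz'y E]] by (rewrite <- H2; exists z; auto).
  assert (Hl : lam z' = lam z) by apply (U_lam M lam _ _ _ E).
  exists z'. split; auto. unfold sg2. rewrite E. f_equal.
  apply functional_extensionality; intros q; apply propositional_extensionality. split.
  - intros [w2 [Hw2 <-]].
    assert (Sset x (sg1 w2)) as [w [Hwx Ew]] by (rewrite H2; exists w2; split; auto; eapply ile_trans; eauto).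
    exists w; split; auto.
    assert (Hlw : lam w = lam w2) by apply (U_lam M lam _ _ _ Ew).
    apply (proj2 (Pdn_le_iff M N shal w z (forest x w z Hwx Hzx))).
    intros i Hi. apply (lam_Pdn _ _ Hl). apply (lam_Pdn _ _ Hlw) in Hi.
    revert i Hi. apply (proj1 (Pdn_le_iff M N shal w2 z' (forest y w2 z' (ile_trans M _ _ _ Hw2 Hz'y) Hz'y))). auto.
  - intros [w [Hw <-]].
    assert (Sset y (sg1 w)) as [w2 [Hw2y Ew]] by (rewrite <- H2; exists w; split; auto; eapply ile_trans; eauto).
    exists w2; split; auto.
    assert (Hlw : lam w2 = lam w) by apply (U_lam M lam _ _ _ Ew).
    apply (proj2 (Pdn_le_iff M N shal w2 z' (forest y w2 z' Hw2y Hz'y))).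
    intros i Hi. apply (lam_Pdn _ _ Hl). apply (lam_Pdn _ _ Hlw) in Hi.
    revert i Hi. apply (proj1 (Pdn_le_iff M N shal w z (forest x w z (ile_trans M _ _ _ Hw Hzx) Hzx))). auto.
Qed.

Lemma sg2_G x y : sg2 x = sg2 y -> (wbot M x <-> wbot M y) /\
      forall c, In c (subs phi) -> (sat M x c <-> sat M y c) /\ (Ex M x c <-> Ex M y c).
Proof. intros H; apply sg1_G. exact (f_equal fst H). Qed.

Lemma sg2_fin : finrange sg2.
Proof.
  destruct sg1_fin as [l Hl]. exists (list_prod l (preds l)). intros x. apply in_prod; auto.
  apply preds_in. intros q [z [_ <-]]; auto.
Qed.

End Labels.

Lemma main1 (L : logic) (phi : form) (M : model) : L <> S4I -> is_model_of L M -> shallow M ->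
  exists M' : model, is_model_of L M' /\ finite_model M' /\
    (satisfiable M phi -> satisfiable M' phi) /\ (falsifiable M phi -> falsifiable M' phi).
Proof.
  intros HL HM [N shal].
  assert (HB : backward_confluent M) by (destruct L; simpl in HM; tauto).
  destruct (finish M phi _ (sg1 M N phi) (sg1_zig M N shal phi) (sg1_G M N phi) (BoxP_bc M HB)
     (sg1_fin M N phi)) as [Hf [Hs Hfa]].
  exists (Filt M (subs phi) _ (sg1 M N phi)). split; [|auto].
  pose proof (Filt_bc M (subs phi) _ (sg1 M N phi) HB).
  destruct L; simpl in *; try congruence.
  - auto.
  - destruct HM as [Hi [Hfc _]]. repeat split; auto.
    apply Filt_infallible; auto. apply Filt_fc; auto.
  - destruct HM as [[Hi [Hfc _]] Hll]. repeat split; auto.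
    apply Filt_infallible; auto. apply Filt_fc; auto. apply Filt_ll; auto. apply sg1_zig; auto.
Qed.

Lemma main2 (phi : form) (M : model) : is_model_of S4I M -> shallow M -> forest_like M ->
  exists M' : model, is_model_of S4I M' /\ finite_model M' /\
    (satisfiable M phi -> satisfiable M' phi) /\ (falsifiable M phi -> falsifiable M' phi).
Proof.
  intros [Hi [Hfc Hdc]] [N shal] Hfo.
  destruct (finish M phi _ (sg2 M N phi) (sg2_zig M N shal phi Hfo) (sg2_G M N phi) (BoxP_dc M Hdc)
     (sg2_fin M N phi)) as [Hf [Hs Hfa]].
  exists (Filt M (subs phi) _ (sg2 M N phi)). split; [|auto].
  repeat split.
  - apply Filt_infallible; auto.
  - apply Filt_fc; auto.
  - apply Filt_dc; auto. apply sg2_zag; auto.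
Qed.

Theorem mainTheorem5 :
  forall (L : logic) (phi : form),
    (L <> S4I ->
      (forall M : model, is_model_of L M -> shallow M -> satisfiable M phi ->
         exists M' : model, is_model_of L M' /\ finite_model M' /\ satisfiable M' phi) /\
      (forall M : model, is_model_of L M -> shallow M -> falsifiable M phi ->
         exists M' : model, is_model_of L M' /\ finite_model M' /\ falsifiable M' phi)) /\
    (L = S4I ->
      (forall M : model, is_model_of S4I M -> shallow M -> forest_like M ->
         satisfiable M phi ->
         exists M' : model, is_model_of S4I M' /\ finite_model M' /\ satisfiable M' phi) /\
      (forall M : model, is_model_of S4I M -> shallow M -> forest_like M ->
         falsifiable M phi ->
         exists M' : model, is_model_of S4I M' /\ finite_model M' /\ falsifiable M' phi)).
Proof.
  intros L phi. split; intros HL; split.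
  - intros M HM Hs Hsat. destruct (main1 L phi M HL HM Hs) as [M' [H1 [H2 [H3 _]]]]. eauto.
  - intros M HM Hs Hsat. destruct (main1 L phi M HL HM Hs) as [M' [H1 [H2 [_ H3]]]]. eauto.
  - intros M HM Hs Hf Hsat. destruct (main2 phi M HM Hs Hf) as [M' [H1 [H2 [H3 _]]]]. eauto.
  - intros M HM Hs Hf Hsat. destruct (main2 phi M HM Hs Hf) as [M' [H1 [H2 [_ H3]]]]. eauto.
Qed.
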